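(* Let $(X,\pi)$ be a finite symmetric two-player game with relative payoff game $(X,\Delta)$. Imitation is subject to a money pump in $(X,\pi)$ if and only if $(X,\Delta)$ is a generalized rock-paper-scissors game.
   Context: A symmetric two-player game $(X,\pi)$: both players have action set $X$ and a bounded payoff function $\pi:X\times X\to\mathbb{R}$, where $\pi(x,y)$ is the payoff of the player choosing $x$ against an opponent choosing $y$. The relative payoff function is $\Delta(x,y)=\pi(x,y)-\pi(y,x)$ and $(X,\Delta)$ is the relative payoff game (a symmetric zero-sum game, $\Delta(x,y)=-\Delta(y,x)$). Imitate-the-best: given an initial action $y_0\in X$ of the imitator and any sequence $(x_t)_{t\ge 0}$ of actions of the opponent, the imitator plays $y_t=x_{t-1}$ if $\Delta(x_{t-1},y_{t-1})>0$ and $y_t=y_{t-1}$ otherwise. Imitation is not subject to a money pump if there exists $M\in\mathbb{R}_+$ such that for every $y_0\in X$ and every sequence $(x_t)_{t\ge0}$ in $X$, $\limsup_{T\to\infty}\sum_{t=0}^{T}\Delta(x_t,y_t)\le M$; otherwise imitation is subject to a money pump. A symmetric zero-sum game $(Y,\Delta)$ (i.e. $\Delta(x,y)=-\Delta(y,x)$) is a generalized rock-paper-scissors matrix if for every $y\in Y$ there is $x\in Y$ with $\Delta(x,y)>0$. A symmetric zero-sum game $(X,\Delta)$ is a generalized rock-paper-scissors game if there is a nonempty subset $\bar X\subseteq X$ such that the restriction $(\bar X,\Delta|_{\bar X\times\bar X})$ is a generalized rock-paper-scissors matrix. *)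

(* Defs.v *)
From HB Require Import structures.
From mathcomp Require Import all_boot all_order all_algebra.
From mathcomp Require Import all_classical all_reals all_analysis.
Set Implicit Arguments. Unset Strict Implicit. Unset Printing Implicit Defensive.
Import Order.TTheory GRing.Theory Num.Theory.
Local Open Scope ring_scope.

(* A symmetric two-player game with action set X and payoff pi : X -> X -> R;
   pi x y is the payoff of the player choosing x against an opponent choosing y. *)

Definition relpay (R : realType) (X : Type) (pi : X -> X -> R) (x y : X) : R :=
  pi x y - pi y x.

(* Imitate-the-best: imitator's action at time t, given y0 and opponent's
   sequence xs. y_{t+1} = x_t if Delta(x_t, y_t) > 0, else y_t. *)
Fixpoint imitate (R : realType) (X : Type) (Delta : X -> X -> R)
    (y0 : X) (xs : nat -> X) (t : nat) : X :=
  match t with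
  | 0%N => y0
  | t'.+1 => let y := imitate Delta y0 xs t' in
             if 0 < Delta (xs t') y then xs t' else y
  end.

Definition cum_relpay (R : realType) (X : Type) (Delta : X -> X -> R)
    (y0 : X) (xs : nat -> X) (T : nat) : R :=
  \sum_(0 <= t < T.+1) Delta (xs t) (imitate Delta y0 xs t).

Definition no_money_pump (R : realType) (X : Type) (pi : X -> X -> R) : Prop :=
  exists M : R, 0 <= M /\
    forall (y0 : X) (xs : nat -> X),
      (limn_esup (fun T => (cum_relpay (relpay pi) y0 xs T)%:E) <= M%:E)%E.

Definition money_pump (R : realType) (X : Type) (pi : X -> X -> R) : Prop :=
  ~ no_money_pump pi.

Definition gRPS_matrix (R : realType) (X : Type) (Delta : X -> X -> R)
    (Y : set X) : Prop :=
  forall y, Y y -> exists2 x, Y x & 0 < Delta x y.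

Definition gRPS_game (R : realType) (X : Type) (Delta : X -> X -> R) : Prop :=
  exists Y : set X, (Y !=set0)%classic /\ gRPS_matrix Delta Y.

(* Main.v *)
Require Import Defs.
From HB Require Import structures.
From mathcomp Require Import all_boot all_order all_algebra.
From mathcomp Require Import all_classical all_reals all_analysis.
From mathcomp Require Import lra.
Set Implicit Arguments. Unset Strict Implicit. Unset Printing Implicit Defensive.
Import Order.TTheory GRing.Theory Num.Theory.
Local Open Scope ring_scope.

Lemma fin_lb (R : realType) (X : finType) (P : X -> Prop) (g : X -> R) :
  (forall y, P y -> 0 < g y) -> exists d, 0 < d /\ forall y, P y -> d <= g y.
Proof.
move=> Hg.
have : forall s : seq X, exists d, 0 < d /\
    forall y, y \in s -> P y -> d <= g y; last first.
  move/(_ (enum X)) => [d [d0 Hd]].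
  by exists d; split => // y; apply: Hd; rewrite mem_enum.
elim=> [|a s [d [d0 Hd]]]; first by exists 1; split.
case: (pselect (P a)) => Pa.
  exists (Num.min d (g a)); split; first by rewrite lt_min d0 Hg.
  move=> y; rewrite inE => /orP[/eqP->|ys] Py; rewrite ge_min ?lexx ?orbT //.
  by rewrite Hd.
exists d; split => // y; rewrite inE => /orP[/eqP->|ys] Py //; exact: Hd.
Qed.

Lemma fin_ub (R : realType) (X : finType) (g : X -> R) :
  exists B, 0 <= B /\ forall y, g y <= B.
Proof.
have : forall s : seq X, exists d, 0 <= d /\
    forall y, y \in s -> g y <= d; last first.
  move/(_ (enum X)) => [d [d0 Hd]].
  by exists d; split => // y; apply: Hd; rewrite mem_enum.
elim=> [|a s [d [d0 Hd]]]; first by exists 0; split.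
exists (Num.max d (g a)); split; first by rewrite le_max d0.
move=> y; rewrite inE => /orP[/eqP->|ys]; rewrite le_max ?lexx ?orbT //.
by rewrite Hd.
Qed.

Lemma einf_bound (R : realType) (u : nat -> R) (c : nat -> R) :
  (forall n m, (n <= m)%N -> c n <= u m) ->
  forall n, ((c n)%:E <= limn_esup (fun T => (u T)%:E))%E.
Proof.
move=> H n.
apply: (le_trans _ (limn_einf_sup _)).
rewrite limn_einf_lim (cvg_lim _ (@cvg_einfs_sup _ _)) //.
apply: (le_trans _ (ereal_sup_ubound _)); last by exists n.
by apply: le_ereal_inf_tmp => _ [k /= nk <-]; rewrite lee_fin H.
Qed.

Lemma esup_bound (R : realType) (u : nat -> R) (M : R) :
  (forall n, u n <= M) -> (limn_esup (fun T => (u T)%:E) <= M%:E)%E.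
Proof.
move=> H; rewrite limn_esup_lim; apply: lime_le; first exact: is_cvg_esups.
by apply: nearW => n; apply: ge_ereal_sup => _ [k _ <-]; rewrite lee_fin.
Qed.

Lemma dir1 (R : realType) (X : finType) (pi : X -> X -> R) :
  gRPS_game (relpay pi) -> money_pump pi.
Proof.
set D := relpay pi.
move=> [Y [[y1 Yy1] HY]] [M [M0 HM]].
have [f Hf] : exists f : X -> X, forall y, Y y -> Y (f y) /\ 0 < D (f y) y.
  suff Hc : forall y, exists x, Y y -> Y x /\ 0 < D x y.
    by have [f Hf] := choice Hc; exists f.
  move=> y; case: (pselect (Y y)) => Yy.
    by have [x Yx Dx] := HY y Yy; exists x.
  by exists y.
have [d [d0 Hd]] := @fin_lb R X Y (fun y => D (f y) y) (fun y Yy => (Hf y Yy).2).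
pose ys t := iter t f y1.
pose xs t := f (ys t).
have Yys t : Y (ys t) by elim: t => [|t IH] //=; exact: (Hf _ IH).1.
have Eim t : imitate D y1 xs t = ys t.
  elim: t => [|t IH] //=; rewrite IH /xs (Hf _ (Yys t)).2 //.
have Hu n m : (n <= m)%N -> (n.+1)%:R * d <= cum_relpay D y1 xs m.
  move=> nm; rewrite /cum_relpay.
  apply: (@le_trans _ _ (\sum_(0 <= t < m.+1) d)).
    rewrite sumr_const_nat subn0 -[d *+ _]mulr_natl ler_pM2r // ler_nat.
    by rewrite ltnS.
  apply: ler_sum => t _; rewrite Eim; exact: Hd.
have := HM y1 xs; apply/negP; rewrite -ltNge.
pose n := Num.Def.archi_bound (M / d).
apply: (lt_le_trans _ (einf_bound Hu n)); rewrite lte_fin.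
have := archi_boundP (divr_ge0 M0 (ltW d0)); rewrite ltr_pdivrMr // -/n => h.
apply: (lt_le_trans h); rewrite ler_pM2r // ler_nat //.
Qed.

Section Dir2.
Variables (R : realType) (X : finType) (D : X -> X -> R).
Hypothesis nG : ~ gRPS_game D.

Definition edge : rel X := fun a b => 0 < D b a.

Lemma acyc x y : 0 < D x y -> ~~ connect edge x y.
Proof.
move=> Dxy; apply/negP => cxy; apply: nG.
exists (fun z => connect edge y z && connect edge z y); split.
  by exists y; rewrite /= connect0.
move=> z /= /andP[cyz czy].
have [->|nzy] := eqVneq z y.
  exists x => //=; rewrite cxy andbT; exact: connect1.
case/connectP: czy => [[|w p]] /=; first by move=> _ E; rewrite E eqxx in nzy.
move=> /andP[ezw pw] Ey; exists w => //=.
rewrite (connect_trans cyz (connect1 ezw)) /=.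
by apply/connectP; exists p.
Qed.

Definition rk a := #|[pred b | connect edge a b]|.

Lemma rk_lt x y : 0 < D x y -> (rk x < rk y)%N.
Proof.
move=> Dxy; apply: proper_card; apply/properP; split.
  apply/fintype.subsetP => b; rewrite !inE => cxb.
  exact: connect_trans (connect1 _) cxb.
by exists y; rewrite !inE ?connect0 // acyc.
Qed.

End Dir2.

Lemma dir2 (R : realType) (X : finType) (pi : X -> X -> R) :
  ~ gRPS_game (relpay pi) -> no_money_pump pi.
Proof.
set D := relpay pi => nG.
have [B [B0 HB]] := fin_ub (fun p : X * X => D p.1 p.2).
exists (B * #|X|%:R); split; first by rewrite mulr_ge0.
move=> y0 xs; apply: esup_bound => T.
have key n : \sum_(0 <= t < n) D (xs t) (imitate D y0 xs t) <=
    B * (rk D y0)%:R - B * (rk D (imitate D y0 xs n))%:R.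
  elim: n => [|n IH]; first by rewrite big_geq // subrr.
  rewrite big_nat_recr //= .
  set yn := imitate D y0 xs n.
  have hb := HB (xs n, yn); rewrite /= in hb.
  case: ifP => Hpos.
    have h : ((rk D (xs n)).+1%:R <= (rk D yn)%:R :> R).
      by rewrite ler_nat; exact: rk_lt nG _ _ Hpos.
    rewrite -addn1 natrD in h.
    have h2 : B * (rk D (xs n))%:R + B <= B * (rk D yn)%:R.
      by rewrite -[X in _ + X]mulr1 -mulrDr ler_wpM2l.
    lra.
  have : D (xs n) yn <= 0 by rewrite leNgt Hpos.
  lra.
rewrite /cum_relpay.
apply: (le_trans (key T.+1)).
have h1 : 0 <= B * (rk D (imitate D y0 xs T.+1))%:R by rewrite mulr_ge0.
have h2 : B * (rk D y0)%:R <= B * #|X|%:R by rewrite ler_wpM2l // ler_nat max_card.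
lra.
Qed.

Theorem theorem1 (R : realType) (X : finType) (pi : X -> X -> R) :
  money_pump pi <-> gRPS_game (relpay pi).
Proof.
split; last exact: dir1.
move=> Hp; case: (pselect (gRPS_game (relpay pi))) => // nG.
by exfalso; apply: Hp; apply: dir2.
Qed.
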